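(* Let $P_1,P_2\in\mathcal P_f$ satisfy $P_1^X=P_2^X$, $P_1^Y=P_2^Y$ and $OR(P_1)=OR(P_2)$ (i.e. their odds ratio functions agree $P_1^X\times P_1^Y$-almost everywhere). Then $P_1=P_2$.
   Context: Let $(\Omega_X,\mathcal B_X)$, $(\Omega_Y,\mathcal B_Y)$ be nonempty measurable spaces, $\Omega=\Omega_X\times\Omega_Y$ with the product $\sigma$-algebra, and $\mathcal P$ the set of probability measures on $\Omega$. For $P\in\mathcal P$ let $P^X,P^Y$ be its marginals and $P^{XY}=P^X\times P^Y$. Let $\mathcal P_{\ll}=\{P\in\mathcal P: P\ll P^{XY}\ll P\}$. For $P\in\mathcal P_\ll$ with (positive) density $p=dP/dP^{XY}$ and fixed reference points $x^\circ\in\Omega_X$, $y^\circ\in\Omega_Y$, the odds ratio function is $OR_p(x,y)=\dfrac{p(x,y)\,p(x^\circ,y^\circ)}{p(x,y^\circ)\,p(x^\circ,y)}$; it is determined up to $P^{XY}$-a.e. equality and denoted $OR(P)$. The Kullback–Leibler information is $I(Q\mid P)=\int\log(dQ/dP)\,dQ$. Let $\mathcal P_f=\{P\in\mathcal P_\ll: I(P^{XY}\mid P)<\infty\}$, i.e. $\log p$ is $P^{XY}$-integrable. *)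

(* Defs.v *)
From HB Require Import structures.
From mathcomp Require Import all_boot all_order all_algebra.
From mathcomp Require Import all_classical all_reals all_analysis.
Set Implicit Arguments. Unset Strict Implicit. Unset Printing Implicit Defensive.
Import Order.TTheory GRing.Theory Num.Theory.
Local Open Scope classical_set_scope.
Local Open Scope ring_scope.

Section odds.
Context (R : realType) (d1 d2 : measure_display)
  (TX : measurableType d1) (TY : measurableType d2).

Definition margX (P : set (TX * TY) -> \bar R) : set TX -> \bar R :=
  pushforward P fst.
Definition margY (P : set (TX * TY) -> \bar R) : set TY -> \bar R :=
  pushforward P snd.

Definition PXY (P : set (TX * TY) -> \bar R) : set (TX * TY) -> \bar R :=
  (margX P \x margY P)%E.

(* P is in P_<< (P << P^{XY} << P) and p is a positive version of dP/dP^{XY} *)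
Definition Pll_density (P : set (TX * TY) -> \bar R) (p : TX * TY -> R) :=
  [/\ P `<< PXY P, PXY P `<< P,
      measurable_fun [set: TX * TY] p,
      (forall z, 0 < p z) &
      (forall A, measurable A -> P A = (\int[PXY P]_(z in A) (p z)%:E)%E)].

Definition Pf_density (P : set (TX * TY) -> \bar R) (p : TX * TY -> R) :=
  Pll_density P p /\ (PXY P).-integrable [set: TX * TY] (fun z => (ln (p z))%:E).

Definition OR (x0 : TX) (y0 : TY) (p : TX * TY -> R) (z : TX * TY) : R :=
  p z * p (x0, y0) / (p (z.1, y0) * p (x0, z.2)).

End odds.

(* Main.v *)
Require Import Defs.
From HB Require Import structures.
From mathcomp Require Import all_boot all_order all_algebra.
From mathcomp Require Import all_classical all_reals all_analysis.
From mathcomp Require Import ring lra measurable_realfun.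
Set Implicit Arguments. Unset Strict Implicit. Unset Printing Implicit Defensive.
Import Order.TTheory GRing.Theory Num.Theory.
Local Open Scope classical_set_scope.
Local Open Scope ring_scope.

Section marg.
Context (R : realType) (d1 d2 : measure_display)
  (TX : measurableType d1) (TY : measurableType d2) (P : probability (TX * TY)%type R).

Definition mX : set TX -> \bar R := margX P.
Let mX0 : mX set0 = 0%E. Proof. by rewrite /mX /margX /pushforward preimage_set0 measure0. Qed.
Let mX_ge0 A : (0 <= mX A)%E. Proof. exact: measure_ge0. Qed.
Let mX_sa : semi_sigma_additive mX.
Proof.
move=> F mF tF mUF; rewrite /mX /margX /pushforward preimage_bigcup.
apply: measure_semi_sigma_additive.
- by move=> n; rewrite -[X in measurable X]setTI; exact: measurable_fst.
- apply/trivIsetP => /= i j _ _ ij; rewrite -preimage_setI.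
  by move/trivIsetP : tF => /(_ _ _ _ _ ij) ->//; rewrite preimage_set0.
- by rewrite -preimage_bigcup -[X in measurable X]setTI; exact: measurable_fst.
Qed.

HB.instance Definition _ := isMeasure.Build _ _ _ mX mX0 mX_ge0 mX_sa.
Let mX_setT : mX setT = 1%E. Proof. by rewrite /mX /margX /pushforward preimage_setT probability_setT. Qed.
HB.instance Definition _ := Measure_isProbability.Build _ _ _ mX mX_setT.

Definition mY : set TY -> \bar R := margY P.
Let mY0 : mY set0 = 0%E. Proof. by rewrite /mY /margY /pushforward preimage_set0 measure0. Qed.
Let mY_ge0 A : (0 <= mY A)%E. Proof. exact: measure_ge0. Qed.
Let mY_sa : semi_sigma_additive mY.
Proof.
move=> F mF tF mUF; rewrite /mY /margY /pushforward preimage_bigcup.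
apply: measure_semi_sigma_additive.
- by move=> n; rewrite -[X in measurable X]setTI; exact: measurable_snd.
- apply/trivIsetP => /= i j _ _ ij; rewrite -preimage_setI.
  by move/trivIsetP : tF => /(_ _ _ _ _ ij) ->//; rewrite preimage_set0.
- by rewrite -preimage_bigcup -[X in measurable X]setTI; exact: measurable_snd.
Qed.

HB.instance Definition _ := isMeasure.Build _ _ _ mY mY0 mY_ge0 mY_sa.
Let mY_setT : mY setT = 1%E. Proof. by rewrite /mY /margY /pushforward preimage_setT probability_setT. Qed.
HB.instance Definition _ := Measure_isProbability.Build _ _ _ mY mY_setT.

Definition mQ := (mX \x mY)%E.
Lemma mQE : PXY P = mQ. Proof. by []. Qed.
End marg.

Section density.
Local Open Scope ereal_scope.
Context d (T : measurableType d) (R : realType) (mu nu : {measure set T -> \bar R}) (g0 : T -> R).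
Hypotheses (mg0 : measurable_fun setT g0) (g0_ge0 : forall x, (0 <= g0 x)%R)
  (hnu : forall A, measurable A -> nu A = \int[mu]_(x in A) (g0 x)%:E).
Import HBNNSimple.

Lemma dens_int (f : T -> \bar R) E : (forall x, 0 <= f x) ->
    measurable E -> measurable_fun E f ->
  \int[mu]_(x in E) (f x * (g0 x)%:E) = \int[nu]_(x in E) f x.
Proof.
move=> f0 mE mf; set g := EFin \o g0.
have mgE : measurable_fun E g by apply/measurable_EFinP/measurable_funTS.
have gge0 x : 0 <= g x by rewrite lee_fin.
pose h := nnsfun_approx mE mf.
have -> : \int[nu]_(x in E) f x =
    lim (\int[nu]_(x in E) (EFin \o h n) x @[n --> \oo]).
  have fE x : E x -> f x = lim ((EFin \o h n) x @[n --> \oo]).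
    by move=> Ex; apply/esym/cvg_lim => //; exact: cvg_nnsfun_approx.
  under eq_integral => x /[!inE] /fE -> //.
  apply: monotone_convergence => //.
  - move=> n; apply/measurable_EFinP.
    by apply: (measurable_funS measurableT) => //; exact/measurable_funP.
  - by move=> n x Ex //=; rewrite lee_fin.
  - by move=> x Ex a b ab; rewrite lee_fin; exact/lefP/nd_nnsfun_approx.
have -> : \int[mu]_(x in E) (f \* g) x =
    lim (\int[mu]_(x in E) ((EFin \o h n) \* g) x @[n --> \oo]).
  have fg x : E x -> f x * g x = lim (((EFin \o h n) \* g) x @[n --> \oo]).
    by move=> Ex; apply/esym/cvg_lim => //; apply: cvgeZr;
      [by []|exact: cvg_nnsfun_approx].
  under eq_integral => x /[!inE] /fg -> //.
  apply: monotone_convergence => [//| | |].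
  - move=> n; apply/emeasurable_funM => //; apply/measurable_funTS.
      exact/measurable_EFinP.
  - by move=> n x Ex /=; rewrite mule_ge0 ?lee_fin.
  - by move=> x Ex a b ab/=; rewrite lee_wpmul2r ?lee_fin//; exact/lefP/nd_nnsfun_approx.
suff suf n : \int[mu]_(x in E) ((EFin \o h n) x * g x) =
    \int[nu]_(x in E) (EFin \o h n) x.
  by under eq_fun do rewrite suf.
transitivity (\int[nu]_(x in E)
   (\sum_(y \in range (h n)) (y * \1_(h n @^-1` [set y]) x)%:E)); last first.
  by apply: eq_integral => t tE; rewrite /= fimfunE -fsumEFin.
have indich m r : measurable_fun E (fun x => (r * \1_(h m @^-1` [set r]) x)%:E).
  by apply: (measurable_comp measurableT) => //; exact: measurable_funM.
rewrite ge0_integral_fsum//; last by move=> m y Ey; exact: nnfun_muleindic_ge0.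
transitivity (\int[mu]_(x in E) (\sum_(y \in range (h n))
    (y * \1_(h n @^-1` [set y]) x)%:E * g x)).
  under [RHS]eq_integral => x xE.
    rewrite -ge0_mule_fsuml => [|y]; last exact: nnfun_muleindic_ge0.
    rewrite fsumEFin // -(fimfunE _ x); over.
  by [].
rewrite ge0_integral_fsum//; last 2 first.
  - move=> y; apply: emeasurable_funM => //.
  - by move=> m y Ey; rewrite mule_ge0 ?nnfun_muleindic_ge0.
apply: eq_fsbigr => r rhn.
under [RHS]eq_integral do rewrite EFinM.
rewrite integralZl_indic_nnsfun => //.
under eq_integral do rewrite EFinM -muleA.
rewrite ge0_integralZl//.
- under eq_integral do rewrite muleC.
  rewrite (eq_integral (g \_ (h n @^-1` [set r]))); last first.
    by move=> x xE; rewrite epatch_indic.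
  by rewrite -integral_mkcondr -hnu// integral_indic// setIC.
- apply: emeasurable_funM => //; first exact/measurable_EFinP.
- by move=> t Et; rewrite mule_ge0 ?lee_fin.
- by move: rhn; rewrite inE => -[t _ <-]; rewrite lee_fin.
Qed.
End density.

Section eqQ.
Local Open Scope ereal_scope.
Context (R : realType) (d1 d2 : measure_display)
  (TX : measurableType d1) (TY : measurableType d2) (P1 P2 : probability (TX * TY)%type R).
Hypotheses (hX : forall A : set TX, measurable A -> margX P1 A = margX P2 A)
  (hY : forall B : set TY, measurable B -> margY P1 B = margY P2 B).

Lemma mQ_eq C : measurable C -> mQ P1 C = mQ P2 C.
Proof.
move=> mC; rewrite /mQ /product_measure1.
transitivity (\int[mX P1]_x (mY P2 \o xsection C) x).
  apply: eq_integral => x _ /=; apply: hY; exact: measurable_xsection.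
by apply: eq_measure_integral => A mA _; apply: hX.
Qed.
End eqQ.

Section sep.
Local Open Scope ereal_scope.
Context (R : realType) (d1 d2 : measure_display)
  (T1 : measurableType d1) (T2 : measurableType d2).

Lemma ex_fin d (T : measurableType d) (m : probability T R) (G : T -> \bar R) :
  \int[m]_y G y < +oo -> exists y, G y < +oo.
Proof.
move=> HG; apply: contrapT => Hn.
have Gy y : G y = +oo.
  apply/eqP; rewrite -leye_eq leNgt; apply/negP => h; apply: Hn; by exists y.
move: HG; rewrite (eq_integral (cst +oo)); last by move=> y _; rewrite Gy.
rewrite integral_cst//. have -> : (m : {measure set T -> \bar R}) setT = 1 := probability_setT m. by rewrite mule1 ltxx.
Qed.

Lemma int_bound d (T : measurableType d) (m : probability T R) (u : T -> R) (c : R) :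
  measurable_fun setT u ->
  \int[m]_x (`|u x + c|)%:E < +oo -> \int[m]_x (`|u x|)%:E < +oo.
Proof.
move=> mu Hf.
have mu' : measurable_fun setT (fun x => (`|u x + c|)%:E).
  apply/measurable_EFinP; apply: measurableT_comp => //; exact: measurable_funD.
apply: (@le_lt_trans _ _ (\int[m]_x ((`|u x + c|)%:E + (`|c|)%:E))).
  apply: ge0_le_integral => //.
  - by apply/measurable_EFinP; apply: measurableT_comp.
  - by apply: emeasurable_funD.
  - move=> x _; rewrite -EFinD lee_fin.
    by have := ler_normB (u x + c)%R c; rewrite addrK.
rewrite ge0_integralD//.
rewrite integral_cst//; have -> : (m : {measure set T -> \bar R}) setT = 1 := probability_setT m; rewrite mule1.
by rewrite lte_add_pinfty // ltry.
Qed.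

Lemma int_sep (m1 : probability T1 R) (m2 : probability T2 R) (u : T1 -> R) (v : T2 -> R) :
  measurable_fun setT u -> measurable_fun setT v ->
  \int[(m1 \x m2)%E]_z (`|u z.1 + v z.2|)%:E < +oo ->
  \int[m1]_x (`|u x|)%:E < +oo /\ \int[m2]_y (`|v y|)%:E < +oo.
Proof.
move=> mu mv H.
pose F := fun z : T1 * T2 => (`|u z.1 + v z.2|)%:E.
have mF : measurable_fun setT F.
  apply/measurable_EFinP; apply: measurableT_comp => //.
  apply: measurable_funD; apply: measurableT_comp => //.
have F0 z : 0 <= F z by rewrite lee_fin.
split.
- move: H; rewrite (fubini_tonelli2 F mF F0) => /ex_fin [y Hy].
  apply: (@int_bound _ _ _ _ (v y)) => //.
- move: H; rewrite (fubini_tonelli1 F mF F0) => /ex_fin [x Hx].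
  apply: (@int_bound _ _ _ _ (u x)) => //.
  by under eq_integral do rewrite addrC.
Qed.
End sep.

Section margint.
Local Open Scope ereal_scope.
Context (R : realType) (d1 d2 : measure_display)
  (TX : measurableType d1) (TY : measurableType d2) (P : probability (TX * TY)%type R)
  (Q : {measure set (TX * TY) -> \bar R}) (p : TX * TY -> R).
Hypotheses (mp : measurable_fun setT p) (p0 : forall z, (0 <= p z)%R)
  (hP : forall A, measurable A -> P A = \int[Q]_(z in A) (p z)%:E).

Lemma int_fst (phi : TX -> \bar R) : measurable_fun setT phi -> (forall x, 0 <= phi x) ->
  \int[Q]_z (phi z.1 * (p z)%:E) = \int[mX P]_x phi x.
Proof.
move=> mphi phi0.
rewrite (@dens_int _ _ _ Q P p mp p0 hP (phi \o fst)) //; last 2 first.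
- by move=> z /=.
- exact: measurableT_comp.
rewrite /mX /margX (@ge0_integral_pushforward _ _ _ _ _ fst (@measurable_fst _ _ TX TY) P) //.

Qed.

Lemma int_snd (phi : TY -> \bar R) : measurable_fun setT phi -> (forall x, 0 <= phi x) ->
  \int[Q]_z (phi z.2 * (p z)%:E) = \int[mY P]_x phi x.
Proof.
move=> mphi phi0.
rewrite (@dens_int _ _ _ Q P p mp p0 hP (phi \o snd)) //; last 2 first.
- by move=> z /=.
- exact: measurableT_comp.
rewrite /mY /margY (@ge0_integral_pushforward _ _ _ _ _ snd (@measurable_snd _ _ TX TY) P) //.

Qed.
End margint.

Section margint2.
Local Open Scope ereal_scope.
Context (R : realType) (d1 d2 : measure_display)
  (TX : measurableType d1) (TY : measurableType d2) (P : probability (TX * TY)%type R)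
  (Q : {measure set (TX * TY) -> \bar R}) (p : TX * TY -> R).
Hypotheses (mp : measurable_fun setT p) (p0 : forall z, (0 <= p z)%R)
  (hP : forall A, measurable A -> P A = \int[Q]_(z in A) (p z)%:E).

Lemma int_sum (f : TX -> R) (g : TY -> R) :
  measurable_fun setT f -> measurable_fun setT g ->
  (forall x, 0 <= f x)%R -> (forall y, 0 <= g y)%R ->
  \int[Q]_z (((f z.1 + g z.2) * p z)%R%:E) =
    \int[mX P]_x (f x)%:E + \int[mY P]_y (g y)%:E.
Proof.
move=> mf mg f0 g0.
under eq_integral do rewrite mulrDl EFinD.
rewrite ge0_integralD //; last 4 first.
- by move=> z _; rewrite lee_fin mulr_ge0.
- apply/measurable_EFinP; apply: measurable_funM => //; exact: measurableT_comp.
- by move=> z _; rewrite lee_fin mulr_ge0.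
- apply/measurable_EFinP; apply: measurable_funM => //; exact: measurableT_comp.
under eq_integral do rewrite EFinM.
rewrite (@int_fst _ _ _ _ _ P Q p mp p0 hP (EFin \o f)); last 2 first.
- by apply/measurable_EFinP.
- by move=> x; rewrite /= lee_fin.
under [X in _ + X]eq_integral do rewrite EFinM.
rewrite (@int_snd _ _ _ _ _ P Q p mp p0 hP (EFin \o g)) //; last by apply/measurable_EFinP.
Qed.
End margint2.

Lemma lnOR (R : realType) (a b c e : R) : (0 < a)%R -> (0 < b)%R -> (0 < c)%R -> (0 < e)%R ->
  ln (a * b / (c * e)) = ln a + ln b - ln c - ln e.
Proof.
move=> a0 b0 c0 e0.
have pab : a * b \is Num.pos by rewrite posrE mulr_gt0.
have pce : c * e \is Num.pos by rewrite posrE mulr_gt0.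
have pice : (c * e)^-1 \is Num.pos by rewrite posrE invr_gt0 mulr_gt0.
rewrite (lnM pab pice) (lnV pce) (@lnM _ a b) ?posrE // (@lnM _ c e) ?posrE //.
lra.
Qed.

Lemma EF0 (R : realType) (x : R) : (0 <= x)%R -> (0 <= x%:E)%E.
Proof. by rewrite lee_fin. Qed.


Lemma cancel_fin (R : realType) (x y : \bar R) : y \is a fin_num -> (x + y = y)%E -> x = 0%E.
Proof. by move=> fy h; rewrite -(addeK x fy) h subee. Qed.

Theorem theorem1 (R : realType) (d1 d2 : measure_display)
  (TX : measurableType d1) (TY : measurableType d2)
  (x0 : TX) (y0 : TY)
  (P1 P2 : probability (TX * TY)%type R) (p1 p2 : TX * TY -> R) :
  Pf_density P1 p1 -> Pf_density P2 p2 ->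
  (forall A : set TX, measurable A -> margX P1 A = margX P2 A) ->
  (forall B : set TY, measurable B -> margY P1 B = margY P2 B) ->
  {ae PXY P1, forall z, OR x0 y0 p1 z = OR x0 y0 p2 z} ->
  forall C : set (TX * TY), measurable C -> P1 C = P2 C.
Proof.
move=> [[_ _ mp1 p1pos hP1] i1] [[_ _ mp2 p2pos hP2] i2] hX hY hOR C mC.
pose Q : {measure set (TX * TY) -> \bar R} := mQ P1.
have QE B : measurable B -> mQ P2 B = Q B by move=> mB; symmetry; exact: (mQ_eq hX hY mB).
have p1ge0 z : 0 <= p1 z by exact: ltW.
have p2ge0 z : 0 <= p2 z by exact: ltW.
have hQ1 A : measurable A -> P1 A = (\int[Q]_(z in A) (p1 z)%:E)%E by exact: hP1.
have hQ2 A : measurable A -> P2 A = (\int[Q]_(z in A) (p2 z)%:E)%E.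
  move=> mA; rewrite hP2 //.
  change (\int[mQ P2]_(z in A) (p2 z)%:E = \int[Q]_(z in A) (p2 z)%:E)%E.
  by apply: eq_measure_integral => B mB _; exact: QE.
have hOR' : {ae Q, forall z, OR x0 y0 p1 z = OR x0 y0 p2 z} := hOR.
have mln1 : measurable_fun setT (fun z => ln (p1 z)) := measurableT_comp (@measurable_ln R) mp1.
have mln2 : measurable_fun setT (fun z => ln (p2 z)) := measurableT_comp (@measurable_ln R) mp2.
have intQ : (\int[Q]_z (`|ln (p1 z) - ln (p2 z)|)%:E < +oo)%E.
  have j1 : Q.-integrable setT (fun z => (ln (p1 z))%:E) := i1.
  have j2 : Q.-integrable setT (fun z => (ln (p2 z))%:E).
    apply/integrableP; split; first exact/measurable_EFinP.
    move/integrableP: i2 => [_].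
    change ((\int[mQ P2]_z `|(ln (p2 z))%:E| < +oo)%E -> (\int[Q]_z `|(ln (p2 z))%:E| < +oo)%E).
    by rewrite (eq_measure_integral Q) // => B mB _; exact: QE.
  have /integrableP [_] := integrableB measurableT j1 j2.
  by under eq_integral do rewrite -EFinB.
pose K := ln (p1 (x0, y0)) - ln (p2 (x0, y0)).
pose U := fun x => ln (p1 (x, y0)) - ln (p2 (x, y0)) - K.
pose V := fun y => ln (p1 (x0, y)) - ln (p2 (x0, y)).
have mU : measurable_fun setT U.
  apply: measurable_funB => //; apply: measurable_funB;
  apply: measurableT_comp => //; apply: measurableT_comp => //; exact: pair2_measurable.
have mV : measurable_fun setT V.
  apply: measurable_funB; apply: measurableT_comp => //; apply: measurableT_comp => //;
  exact: pair1_measurable.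
have hw : {ae Q, forall z, ln (p1 z) - ln (p2 z) = U z.1 + V z.2}.
  apply: filterS hOR' => z; rewrite /OR => h; have := f_equal (@ln R) h.
  rewrite !lnOR //; rewrite /U /V /K; lra.
have [intU intV] : (\int[mX P1]_x (`|U x|)%:E < +oo /\ \int[mY P1]_y (`|V y|)%:E < +oo)%E.
  apply: int_sep => //.
  change (\int[Q]_z (`|U z.1 + V z.2|)%:E < +oo)%E.
  rewrite (@ge0_ae_eq_integral _ _ _ Q setT _ (fun z => (`|ln (p1 z) - ln (p2 z)|)%:E)) //.
  - apply/measurable_EFinP; apply: measurableT_comp => //; apply: measurable_funD;
    exact: measurableT_comp.
  - apply/measurable_EFinP; apply: measurableT_comp => //; exact: measurable_funB.
  - by apply: filterS hw => z -> _.
pose Up := fun x => (`|U x| + U x) / 2.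
pose Un := fun x => (`|U x| - U x) / 2.
pose Vp := fun y => (`|V y| + V y) / 2.
pose Vn := fun y => (`|V y| - V y) / 2.
have nU x : (U x <= `|U x|) /\ (- U x <= `|U x|).
  by split; [exact: ler_norm| rewrite -normrN; exact: ler_norm].
have nV y : (V y <= `|V y|) /\ (- V y <= `|V y|).
  by split; [exact: ler_norm| rewrite -normrN; exact: ler_norm].
have Up0 x : 0 <= Up x by have := nU x; rewrite /Up; lra.
have Un0 x : 0 <= Un x by have := nU x; rewrite /Un; lra.
have Vp0 y : 0 <= Vp y by have := nV y; rewrite /Vp; lra.
have Vn0 y : 0 <= Vn y by have := nV y; rewrite /Vn; lra.
have mUp : measurable_fun setT Up.
  by apply: measurable_funM => //; apply: measurable_funD => //; exact: measurableT_comp.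
have mUn : measurable_fun setT Un.
  by apply: measurable_funM => //; apply: measurable_funB => //; exact: measurableT_comp.
have mVp : measurable_fun setT Vp.
  by apply: measurable_funM => //; apply: measurable_funD => //; exact: measurableT_comp.
have mVn : measurable_fun setT Vn.
  by apply: measurable_funM => //; apply: measurable_funB => //; exact: measurableT_comp.
have fUp : (\int[mX P1]_x (Up x)%:E)%E \is a fin_num.
  rewrite ge0_fin_numE; last by apply: integral_ge0 => x _; rewrite lee_fin.
  apply: le_lt_trans intU; apply: ge0_le_integral => //.
  - by move=> x _; rewrite lee_fin.
  - exact/measurable_EFinP.
  - apply/measurable_EFinP; exact: measurableT_comp.
  - move=> x _; rewrite lee_fin; have := nU x; rewrite /Up; lra.
have fUn : (\int[mX P1]_x (Un x)%:E)%E \is a fin_num.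
  rewrite ge0_fin_numE; last by apply: integral_ge0 => x _; rewrite lee_fin.
  apply: le_lt_trans intU; apply: ge0_le_integral => //.
  - by move=> x _; rewrite lee_fin.
  - exact/measurable_EFinP.
  - apply/measurable_EFinP; exact: measurableT_comp.
  - move=> x _; rewrite lee_fin; have := nU x; rewrite /Un; lra.
have fVp : (\int[mY P1]_x (Vp x)%:E)%E \is a fin_num.
  rewrite ge0_fin_numE; last by apply: integral_ge0 => x _; rewrite lee_fin.
  apply: le_lt_trans intV; apply: ge0_le_integral => //.
  - by move=> x _; rewrite lee_fin.
  - exact/measurable_EFinP.
  - apply/measurable_EFinP; exact: measurableT_comp.
  - move=> x _; rewrite lee_fin; have := nV x; rewrite /Vp; lra.
have fVn : (\int[mY P1]_x (Vn x)%:E)%E \is a fin_num.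
  rewrite ge0_fin_numE; last by apply: integral_ge0 => x _; rewrite lee_fin.
  apply: le_lt_trans intV; apply: ge0_le_integral => //.
  - by move=> x _; rewrite lee_fin.
  - exact/measurable_EFinP.
  - apply/measurable_EFinP; exact: measurableT_comp.
  - move=> x _; rewrite lee_fin; have := nV x; rewrite /Vn; lra.
have Ip1 : (\int[Q]_z (((Up z.1 + Vp z.2) * p1 z)%:E) = \int[mX P1]_x (Up x)%:E + \int[mY P1]_y (Vp y)%:E)%E.
  exact: (@int_sum _ _ _ _ _ P1 Q p1 mp1 p1ge0 hQ1 Up Vp mUp mVp Up0 Vp0).
have In1 : (\int[Q]_z (((Un z.1 + Vn z.2) * p1 z)%:E) = \int[mX P1]_x (Un x)%:E + \int[mY P1]_y (Vn y)%:E)%E.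
  exact: (@int_sum _ _ _ _ _ P1 Q p1 mp1 p1ge0 hQ1 Un Vn mUn mVn Un0 Vn0).
have Ip2 : (\int[Q]_z (((Up z.1 + Vp z.2) * p2 z)%:E) = \int[mX P1]_x (Up x)%:E + \int[mY P1]_y (Vp y)%:E)%E.
  rewrite (@int_sum _ _ _ _ _ P2 Q p2 mp2 p2ge0 hQ2 Up Vp mUp mVp Up0 Vp0).
  congr (_ + _)%E; apply: eq_measure_integral => A mA _; symmetry.
  - exact: hX.
  - exact: hY.
have In2 : (\int[Q]_z (((Un z.1 + Vn z.2) * p2 z)%:E) = \int[mX P1]_x (Un x)%:E + \int[mY P1]_y (Vn y)%:E)%E.
  rewrite (@int_sum _ _ _ _ _ P2 Q p2 mp2 p2ge0 hQ2 Un Vn mUn mVn Un0 Vn0).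
  congr (_ + _)%E; apply: eq_measure_integral => A mA _; symmetry.
  - exact: hX.
  - exact: hY.
pose k := fun z => (p1 z - p2 z) * (ln (p1 z) - ln (p2 z)).
have k0 z : 0 <= k z.
  rewrite /k; have [h|h] := leP (p1 z) (p2 z).
  - have : ln (p1 z) <= ln (p2 z) by rewrite ler_ln ?posrE.
    move=> h2; apply: mulr_le0; lra.
  - have : ln (p2 z) < ln (p1 z) by rewrite ltr_ln ?posrE.
    move=> h2; apply: mulr_ge0; lra.
have mk : measurable_fun setT k.
  by apply: measurable_funM; apply: measurable_funB.
have mhp : measurable_fun setT (fun z : TX * TY => Up z.1 + Vp z.2).
  by apply: measurable_funD; apply: measurableT_comp.
have mhn : measurable_fun setT (fun z : TX * TY => Un z.1 + Vn z.2).
  by apply: measurable_funD; apply: measurableT_comp.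
have Hid : (\int[Q]_z ((k z + (Up z.1 + Vp z.2) * p2 z + (Un z.1 + Vn z.2) * p1 z)%:E) =
    \int[Q]_z (((Up z.1 + Vp z.2) * p1 z + (Un z.1 + Vn z.2) * p2 z)%:E))%E.
  apply: ge0_ae_eq_integral => //.
  - apply/measurable_EFinP; apply: measurable_funD; [apply: measurable_funD => //|];
    exact: measurable_funM.
  - apply/measurable_EFinP; apply: measurable_funD; exact: measurable_funM.
  - move=> z zT; rewrite -[X in (X <= _)%E]/(0%:E) lee_fin.
    by apply: addr_ge0; [apply: addr_ge0 => //|]; apply: mulr_ge0 => //; apply: addr_ge0.
  - move=> z zT; rewrite -[X in (X <= _)%E]/(0%:E) lee_fin.
    by apply: addr_ge0; apply: mulr_ge0 => //; apply: addr_ge0.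
  - apply: filterS hw => z hz _; congr (_%:E); by rewrite /k hz /Up /Un /Vp /Vn; field.
have L : (\int[Q]_z ((k z + (Up z.1 + Vp z.2) * p2 z + (Un z.1 + Vn z.2) * p1 z)%:E) =
   \int[Q]_z (k z)%:E + (\int[mX P1]_x (Up x)%:E + \int[mY P1]_y (Vp y)%:E)
   + (\int[mX P1]_x (Un x)%:E + \int[mY P1]_y (Vn y)%:E))%E.
  under eq_integral do rewrite !EFinD.
  rewrite (ge0_integralD Q measurableT); last 4 first.
  - by move=> w wT; apply: adde_ge0; apply: EF0 => //; apply: mulr_ge0 => //; apply: addr_ge0.
  - by apply: emeasurable_funD; apply/measurable_EFinP => //; apply: measurable_funM.
  - by move=> w wT; apply: EF0; apply: mulr_ge0 => //; apply: addr_ge0.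
  - by apply/measurable_EFinP; apply: measurable_funM.
  rewrite (ge0_integralD Q measurableT); last 4 first.
  - by move=> w wT; apply: EF0.
  - by apply/measurable_EFinP.
  - by move=> w wT; apply: EF0; apply: mulr_ge0 => //; apply: addr_ge0.
  - by apply/measurable_EFinP; apply: measurable_funM.
  by rewrite Ip2 In1.
have Rr : (\int[Q]_z (((Up z.1 + Vp z.2) * p1 z + (Un z.1 + Vn z.2) * p2 z)%:E) =
   (\int[mX P1]_x (Up x)%:E + \int[mY P1]_y (Vp y)%:E)
   + (\int[mX P1]_x (Un x)%:E + \int[mY P1]_y (Vn y)%:E))%E.
  under eq_integral do rewrite EFinD.
  rewrite (ge0_integralD Q measurableT); last 4 first.
  - by move=> w wT; apply: EF0; apply: mulr_ge0 => //; apply: addr_ge0.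
  - by apply/measurable_EFinP; apply: measurable_funM.
  - by move=> w wT; apply: EF0; apply: mulr_ge0 => //; apply: addr_ge0.
  - by apply/measurable_EFinP; apply: measurable_funM.
  by rewrite Ip1 In2.
have Hk : (\int[Q]_z (k z)%:E = 0)%E.
  have fX : ((\int[mX P1]_x (Up x)%:E + \int[mY P1]_y (Vp y)%:E)
   + (\int[mX P1]_x (Un x)%:E + \int[mY P1]_y (Vn y)%:E))%E \is a fin_num.
    by rewrite fin_numD; apply/andP; split; rewrite fin_numD; apply/andP; split.
  by apply: (cancel_fin fX); move: Hid; rewrite L Rr -addeA.
have aek : {ae Q, forall z, k z = 0}.
  have : ae_eq Q setT (fun z => (k z)%:E) (cst 0%E).
    apply/(ae_eq_integral_abs Q measurableT).
    - by apply/measurable_EFinP.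
    - by under eq_integral do rewrite gee0_abs ?lee_fin //.
  by apply: filterS => z /(_ I) [].
have aep : {ae Q, forall z, p1 z = p2 z}.
  apply: filterS aek => z; rewrite /k => /eqP; rewrite mulf_eq0 => /orP [|].
  - by rewrite subr_eq0 => /eqP.
  - by rewrite subr_eq0 => /eqP /ln_inj; apply; rewrite posrE.
rewrite hQ1 // hQ2 //.
apply: ae_eq_integral => //.
- by apply/measurable_funTS/measurable_EFinP.
- by apply/measurable_funTS/measurable_EFinP.
- by apply: filterS aep => z -> _.
Qed.
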